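(* Let $0<q<1$, $\beta\in\mathbb{C}$ and $n\ge 0$ an integer, and set $a=q^{-n/2+1/4}\beta$. Let $\tau$ be the divided difference operator acting on polynomials in $x=(z+z^{-1})/2$ by $$(\tau f)(z)=\frac{f(q^{1/2}z)-f(q^{-1/2}z)}{z-z^{-1}} .$$ Then $$\sum_{k=0}^\infty\frac{q^{k^2/4}\beta^k}{(q;q)_k}\,\tau^k\,H_n(x|q)=H_n(x;a|q),$$ where the sum is finite since $\tau$ lowers polynomial degree in $x$.
   Context: $(a;q)_0=1$, $(a;q)_k=\prod_{j=0}^{k-1}(1-aq^j)$, $\begin{bmatrix} n\\ k\end{bmatrix}_q=\frac{(q;q)_n}{(q;q)_k(q;q)_{n-k}}$. With $x=\cos\theta$, $z=e^{i\theta}$, the continuous $q$-Hermite polynomials are $H_n(x|q)=\sum_{k=0}^n\begin{bmatrix} n\\ k\end{bmatrix}_q e^{i(n-2k)\theta}$, and the continuous big $q$-Hermite polynomials are $$H_n(x;a|q)=e^{in\theta}\,{}_2\phi_0\big(q^{-n},ae^{i\theta};-;q;q^ne^{-2i\theta}\big)=e^{in\theta}\sum_{k=0}^n\frac{(q^{-n};q)_k(ae^{i\theta};q)_k}{(q;q)_k}(-1)^kq^{-k(k-1)/2}\big(q^ne^{-2i\theta}\big)^k .$$ *)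

(* Defs.v *)
From mathcomp Require Import all_boot all_order all_algebra.
From mathcomp Require Import complex.
From mathcomp Require Import reals.
Set Implicit Arguments. Unset Strict Implicit. Unset Printing Implicit Defensive.
Import Order.TTheory GRing.Theory Num.Theory.
Local Open Scope ring_scope.
Local Open Scope complex_scope.

Section Defs.
Variable R : realType.
Local Notation C := R[i].

Definition qpoch (q a : C) (k : nat) : C := \prod_(j < k) (1 - a * q ^+ j).

Definition qbinom (q : C) (n k : nat) : C :=
  qpoch q q n / (qpoch q q k * qpoch q q (n - k)).

(* continuous q-Hermite H_n(x|q) as a function of z (x = (z + z^-1)/2):
   sum_{k=0}^n [n k]_q z^(n-2k) *)
Definition qHermite (q : C) (n : nat) (z : C) : C :=
  \sum_(k < n.+1) qbinom q n k * (z ^+ (n - k) * z ^- k).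

Definition bigqHermite (q a : C) (n : nat) (z : C) : C :=
  z ^+ n * \sum_(k < n.+1)
    (qpoch q (q ^- n) k * qpoch q (a * z) k / qpoch q q k
      * (-1) ^+ k * q ^- 'C(k, 2) * (q ^+ n * z ^- 2) ^+ k).

(* divided difference operator, with s = q^(1/2):
   (tau f)(z) = (f(s z) - f(s^-1 z)) / (z - z^-1) *)
Definition qtau (s : C) (f : C -> C) : C -> C :=
  fun z => (f (s * z) - f (s^-1 * z)) / (z - z^-1).

End Defs.

(* Main.v *)
Require Import Defs.
From mathcomp Require Import all_boot all_order all_algebra.
From mathcomp Require Import complex.
From mathcomp Require Import reals.
From mathcomp Require Import ring zify.
Import Order.TTheory GRing.Theory Num.Theory.
Local Open Scope ring_scope.
Local Open Scope complex_scope.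

Lemma qpochS (R : realType) (Q a : R[i]) k :
  qpoch Q a k.+1 = qpoch Q a k * (1 - a * Q ^+ k).
Proof. by rewrite /qpoch big_ord_recr. Qed.

Lemma qpoch0 (R : realType) (Q a : R[i]) : qpoch Q a 0 = 1.
Proof. by rewrite /qpoch big_ord0. Qed.

Lemma fS_neq0 (R : realType) (Q : R[i]) (hf : forall k, qpoch Q Q k != 0) k :
  1 - Q ^+ k.+1 != 0.
Proof.
have := hf k.+1; rewrite qpochS mulf_eq0 negb_or exprS => /andP[_ ->] //.
Qed.

Lemma L1 (R : realType) (Q : R[i]) (hf : forall k, qpoch Q Q k != 0)
  (h : nat -> R[i]) m :
  \sum_(k < m.+2) (1 - Q ^+ (m.+1 - k)) * h k / (qpoch Q Q k * qpoch Q Q (m.+1 - k))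
  = \sum_(k < m.+1) h k / (qpoch Q Q k * qpoch Q Q (m - k)).
Proof.
rewrite big_ord_recr /= subnn expr0 subrr !mul0r addr0.
apply: eq_bigr => [[k hk]] _ /=.
rewrite subSn // qpochS -exprS.
have h1 := @fS_neq0 _ _ hf (m - k)%N%N.
have h2 := hf k; have h3 := hf (m - k)%N.
by field; rewrite ?h1 ?h2 ?h3 ?mulf_neq0.
Qed.

Lemma L2 (R : realType) (Q : R[i]) (hf : forall k, qpoch Q Q k != 0)
  (h : nat -> R[i]) m :
  \sum_(k < m.+2) (1 - Q ^+ k) * h k / (qpoch Q Q k * qpoch Q Q (m.+1 - k))
  = \sum_(k < m.+1) h k.+1 / (qpoch Q Q k * qpoch Q Q (m - k)).
Proof.
rewrite big_ord_recl /= expr0 subrr !mul0r add0r.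
apply: eq_bigr => [[k hk]] _ /=.
rewrite /bump /= add1n subSS qpochS -exprS.
have h1 := @fS_neq0 _ _ hf k.
have h2 := hf k; have h3 := hf (m - k)%N.
by field; rewrite ?h1 ?h2 ?h3 ?mulf_neq0.
Qed.
Arguments L1 {R Q}.
Arguments L2 {R Q}.
Arguments fS_neq0 {R Q}.

Definition G (R : realType) (Q : R[i]) m (w : R[i]) :=
  \sum_(k < m.+1) w ^+ (m - k) * w ^- k / (qpoch Q Q k * qpoch Q Q (m - k)).

Arguments G {R}.

Lemma qHermiteG (R : realType) (Q : R[i]) m w :
  qHermite Q m w = qpoch Q Q m * G Q m w.
Proof.
rewrite /qHermite /G mulr_sumr; apply: eq_bigr => k _; rewrite /qbinom; ring.
Qed.

Lemma G0 (R : realType) (Q : R[i]) w : G Q 0 w = 1.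
Proof. rewrite /G big_ord1 /= qpoch0 subn0 !expr0; by field; rewrite ?mulr1 ?oner_neq0. Qed.

Lemma tauG (R : realType) (Q s w : R[i]) (hf : forall k, qpoch Q Q k != 0)
  (hs : s != 0) (hQ : Q = s ^+ 2) (hw : w != 0) m :
  G Q m.+1 (s * w) - G Q m.+1 (s^-1 * w) = - s ^- m.+1 * (w - w^-1) * G Q m w.
Proof.
set h := fun k => w ^+ (m.+1 - k) * w ^- k.
have E1 : w * G Q m w = \sum_(k < m.+2) (1 - Q ^+ (m.+1 - k)) * h k
     / (qpoch Q Q k * qpoch Q Q (m.+1 - k)).
  rewrite (L1 hf) /G mulr_sumr; apply: eq_bigr => [[k hk]] _ /=.
  by rewrite /h subSn // exprS; ring.
have E2 : w^-1 * G Q m w = \sum_(k < m.+2) (1 - Q ^+ k) * h k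
     / (qpoch Q Q k * qpoch Q Q (m.+1 - k)).
  rewrite (L2 hf) /G mulr_sumr; apply: eq_bigr => [[k hk]] _ /=.
  rewrite /h subSS exprS; field; by rewrite ?hw ?expf_neq0 ?hf.
rewrite -mulrA mulrBl E1 E2 -!sumrB mulr_sumr.
apply: eq_bigr => [[k hk]] _ /=.
rewrite /h.
set j := (m.+1 - k)%N.
have hjk : (m.+1 = j + k)%N by rewrite /j subnK.
rewrite [in s ^- m.+1]hjk exprD !exprMn !exprVn hQ -!exprM mulnC [(2 * k)%N]mulnC !exprM.
have h1 := hf k; have h2 := hf j.
have h3 : s ^+ j != 0 by rewrite expf_neq0.
have h4 : s ^+ k != 0 by rewrite expf_neq0.
have h5 : w ^+ j != 0 by rewrite expf_neq0.
have h6 : w ^+ k != 0 by rewrite expf_neq0.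
rewrite !invfM.
field.
by rewrite -hQ ?h1 ?h2 ?h3 ?h4 ?h5 ?h6.
Qed.

Definition good (R : realType) (Q w : R[i]) :=
  w != 0 /\ forall m : int, w ^+ 2 != Q ^ m.

Arguments good {R}.

Lemma good_mul (R : realType) (Q s w : R[i]) (hs : s != 0) (hQ : Q = s ^+ 2) :
  good Q w -> good Q (s * w) /\ good Q (s^-1 * w).
Proof.
move=> [hw H]; have hQ0 : Q != 0 by rewrite hQ expf_neq0.
split; split.
- by rewrite mulf_neq0.
- move=> m; apply/negP => /eqP E; move: (H (m - 1)); rewrite expfzDr // -E.
  by rewrite exprN1 exprMn -hQ mulrC mulrA mulVf // mul1r eqxx.
- by rewrite mulf_neq0 // invr_eq0.
- move=> m; apply/negP => /eqP E; move: (H (m + 1)); rewrite expfzDr // -E.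
  by rewrite expr1z exprMn exprVn -hQ mulrC mulrA mulfV // mul1r eqxx.
Qed.

Arguments good_mul {R Q s w}.

Lemma good_ne (R : realType) (Q w : R[i]) : good Q w -> w - w^-1 != 0.
Proof.
move=> [hw H]; apply/negP => /eqP E; move: (H 0); rewrite expr0z.
by move: E => /eqP; rewrite subr_eq0 => /eqP E; rewrite expr2 {2}E mulfV // eqxx.
Qed.

Arguments good_ne {R Q w}.

Definition coefc (R : realType) (Q s : R[i]) n k :=
  if (k <= n)%N then qpoch Q Q n * (-1) ^+ k * s ^+ 'C(k, 2) / s ^+ (k * n) else 0.

Arguments coefc {R}.

Lemma iterG (R : realType) (Q s : R[i]) (hf : forall k, qpoch Q Q k != 0)
  (hs : s != 0) (hQ : Q = s ^+ 2) n k :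
  forall w, good Q w ->
  iter k (qtau s) (qHermite Q n) w = coefc Q s n k * G Q (n - k) w.
Proof.
elim: k => [|k IH] w gw.
  by rewrite /= qHermiteG /coefc /= subn0 mul0n !expr0 !mulr1 invr1 mulr1.
have [g1 g2] := good_mul hs hQ gw.
rewrite iterS {1}/qtau !IH //.
case: (ltnP k n) => hkn.
  have E : (n - k = (n - k.+1).+1)%N by rewrite subnSK.
  rewrite E -mulrBr tauG // ?gw.1 //.
  have hne := good_ne gw.
  rewrite /coefc hkn (ltnW hkn) -E.
  rewrite binS bin1 mulSn !exprD.
  have -> : s ^+ n = s ^+ (n - k) * s ^+ k by rewrite -exprD subnK // ltnW.
  have h1 : s ^+ (n - k) != 0 by rewrite expf_neq0.
  have h2 : s ^+ k != 0 by rewrite expf_neq0.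
  have h3 : s ^+ (k * n) != 0 by rewrite expf_neq0.
  rewrite exprS.
  have hw0 : w != 0 := gw.1.
  have hne2 : w * w - 1 != 0.
    have -> : w * w - 1 = w * (w - w^-1) by field.
    by rewrite mulf_neq0.
  by field; rewrite ?hne2 ?hw0 ?h1 ?h2 ?h3.
have -> : (n - k = 0)%N by apply/eqP; rewrite subn_eq0.
have -> : (n - k.+1 = 0)%N by apply/eqP; rewrite subn_eq0 ltnW.
by rewrite !G0 subrr mul0r /coefc ltnNge hkn /= mul0r.
Qed.
Arguments iterG {R Q s}.

Lemma tri (V : nmodType) (F : nat -> nat -> V) n :
  \sum_(k < n.+1) \sum_(j < k.+1) F j (k - j)%N
  = \sum_(j < n.+1) \sum_(i < (n - j)%N.+1) F j i.
Proof.
elim: n => [|n IH]; first by rewrite !big_ord1.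
rewrite big_ord_recr /= IH.
rewrite [RHS]big_ord_recr /= subnn big_ord1.
rewrite [X in _ + X = _]big_ord_recr /= subnn.
rewrite addrA; congr (_ + _).
have -> : \sum_(j < n.+1) \sum_(i < (n.+1 - j)%N.+1) F j i
  = \sum_(j < n.+1) (\sum_(i < (n - j)%N.+1) F j i + F j (n.+1 - j)%N).
  apply: eq_bigr => [[j hj]] _ /=.
  by rewrite subSn // big_ord_recr /=.
by rewrite big_split.
Qed.

Lemma qpochA (R : realType) (Q : R[i]) (hQ : Q != 0) n k : (k <= n)%N ->
  qpoch Q (Q ^- n) k * (-1) ^+ k * Q ^- 'C(k, 2) * (Q ^+ n) ^+ k * qpoch Q Q (n - k)
  = qpoch Q Q n.
Proof.
elim: k => [|k IH] hk.
  by rewrite qpoch0 subn0 !expr0 invr1 !mulr1 mul1r.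
have IH' := IH (ltnW hk).
have [d hd] : exists d, n = (k + d).+1.
  by exists (n - k.+1)%N; rewrite -addSn subnKC.
have E : (n - k = d.+1)%N by rewrite hd subSn ?leq_addr // addKn.
have E2 : (n - k.+1 = d)%N by rewrite hd subSS addKn.
rewrite E qpochS in IH'.
rewrite E2 -[RHS]IH' qpochS binS bin1.
rewrite hd.
rewrite !exprS !exprD.
have h1 : Q ^+ k != 0 by rewrite expf_neq0.
have h2 : Q ^+ d != 0 by rewrite expf_neq0.
have h3 : Q ^+ 'C(k, 2) != 0 by rewrite expf_neq0.
by field; rewrite ?hQ ?h1 ?h2 ?h3.
Qed.

Definition cc (R : realType) (Q x : R[i]) j := (-1) ^+ j * Q ^+ 'C(j, 2) * x ^+ j.
Arguments cc {R}.

Lemma qbin (R : realType) (Q x : R[i]) (hf : forall k, qpoch Q Q k != 0) k :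
  qpoch Q x k = qpoch Q Q k *
    \sum_(j < k.+1) cc Q x j / (qpoch Q Q j * qpoch Q Q (k - j)).
Proof.
elim: k => [|k IH].
  by rewrite big_ord1 !qpoch0 /cc bin0n /= !expr0 !mulr1 !mul1r invr1.
rewrite qpochS IH qpochS -!mulrA; congr (_ * _); symmetry.
have E : forall j : 'I_k.+2,
   (1 - Q * Q ^+ k) * (cc Q x j / (qpoch Q Q j * qpoch Q Q (k.+1 - j)))
   = (1 - Q ^+ (k.+1 - j)) * cc Q x j / (qpoch Q Q j * qpoch Q Q (k.+1 - j))
   + (1 - Q ^+ j) * (Q ^+ (k.+1 - j) * cc Q x j) / (qpoch Q Q j * qpoch Q Q (k.+1 - j)).
  move=> [j hj] /=.
  have -> : Q * Q ^+ k = Q ^+ (k.+1 - j) * Q ^+ j by rewrite -exprD subnK // -exprS.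
  ring.
rewrite mulr_sumr (eq_bigr _ (fun j _ => E j)) big_split /=.
rewrite (L1 hf) (L2 hf (fun j => Q ^+ (k.+1 - j) * cc Q x j)) -big_split /=.
rewrite mulr_suml; apply: eq_bigr => [[j hj]] _ /=.
rewrite subSS /cc binS bin1 !exprS.
have -> : Q ^+ k = Q ^+ (k - j) * Q ^+ j by rewrite -exprD subnK.
rewrite exprD; ring.
Qed.
Arguments qpochA {R Q}. Arguments qbin {R Q}.

Lemma tz (F : fieldType) (t : F) (n : nat) : t != 0 -> t ^ (1 - 2 * n%:Z) = t / t ^+ (2 * n).
Proof.
move=> ht; rewrite expfzDr // expr1z.
have -> : (2 * n%:Z) = (2 * n)%N :> int by rewrite PoszM.
by rewrite -exprnN.
Qed.

Lemma sqC (j : nat) : (j ^ 2 = 'C(j, 2) * 2 + j)%N.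
Proof. elim: j => // j IH. rewrite binS bin1. nia. Qed.

Lemma term_eq (R : realType) (t s Q beta z : R[i]) (ht : t != 0) (hz : z != 0)
  (hs : s = t ^+ 2) (hQ : Q = s ^+ 2) (fj fi fr fn : R[i])
  (hfj : fj != 0) (hfi : fi != 0) (hfr : fr != 0) j i r n (hn : n = (j + i + r)%N) :
  t ^+ (j ^ 2) * beta ^+ j / fj * (fn * (-1) ^+ j * s ^+ 'C(j, 2) / s ^+ (j * n)
     * (z ^+ r * z ^- i / (fi * fr)))
  = z ^+ n * (fn / fr) * (z ^- 2) ^+ (j + i)
     * (cc Q ((t ^ (1 - 2 * n%:Z) * beta) * z) j / (fj * fi)).
Proof.
subst n Q s; rewrite /cc tz // (sqC j).
set u := t ^+ 'C(j, 2); set v := t ^+ j; set w := t ^+ (j * (j + i + r)).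
have e0 : t ^+ ('C(j, 2) * 2 + j) = u ^+ 2 * v by rewrite exprD exprM.
have e1 : (t ^+ 2) ^+ 'C(j, 2) = u ^+ 2 by rewrite -!exprM mulnC.
have e2 : (t ^+ 2) ^+ (j * (j + i + r)) = w ^+ 2 by rewrite -!exprM mulnC.
have e3 : ((t ^+ 2) ^+ 2) ^+ 'C(j, 2) = u ^+ 4.
  by rewrite -!exprM; congr (_ ^+ _); lia.
have e4 : (t / t ^+ (2 * (j + i + r)) * beta * z) ^+ j
    = v / w ^+ 2 * beta ^+ j * z ^+ j.
  rewrite !exprMn exprVn -!exprM; congr (_ * _ * _ * _); congr (_ ^-1).
  by congr (_ ^+ _); lia.
have e5 : z ^+ (j + i + r) = z ^+ j * z ^+ i * z ^+ r by rewrite !exprD.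
have e6 : (z ^- 2) ^+ (j + i) = ((z ^+ j) ^+ 2 * (z ^+ i) ^+ 2)^-1.
  by rewrite exprVn -!exprMn -exprD -!exprM mulnC.
rewrite e0 e1 e2 e3 e4 e5 e6.
have hu : u != 0 by rewrite expf_neq0.
have hv : v != 0 by rewrite expf_neq0.
have hw : w != 0 by rewrite expf_neq0.
have hzj : z ^+ j != 0 by rewrite expf_neq0.
have hzi : z ^+ i != 0 by rewrite expf_neq0.
have hzr : z ^+ r != 0 by rewrite expf_neq0.
by field; rewrite ?hu ?hv ?hw ?hzj ?hzi ?hzr ?hfj ?hfi ?hfr.
Qed.

Theorem mainTheorem4 (R : realType) (q : R) (beta : R[i]) (n : nat)
  (hq0 : 0 < q) (hq1 : q < 1) (N : nat) (hN : (n < N)%N)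
  (z : R[i]) (hz0 : z != 0) (hz : forall m : int, z ^+ 2 != (q%:C) ^ m) :
  \sum_(k < N)
     ((Num.sqrt (Num.sqrt q))%:C ^+ (k ^ 2) * beta ^+ k / qpoch q%:C q%:C k
       * iter k (qtau (Num.sqrt q)%:C) (qHermite q%:C n) z)
  = bigqHermite q%:C ((Num.sqrt (Num.sqrt q))%:C ^ (1 - 2 * n%:Z) * beta) n z.
Proof.
set t := (Num.sqrt (Num.sqrt q))%:C.
set s := (Num.sqrt q)%:C.
set Q := q%:C.
have hs2 : Q = s ^+ 2.
  by rewrite /s /Q -rmorphXn sqr_sqrtr // ltW.
have ht2 : s = t ^+ 2.
  by rewrite /s /t -rmorphXn sqr_sqrtr // sqrtr_ge0.
have hQ0 : Q != 0 by rewrite /Q fmorph_eq0 gt_eqF.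
have hs0 : s != 0 by apply: contraNneq hQ0 => E; rewrite hs2 E expr0n.
have ht0 : t != 0 by apply: contraNneq hs0 => E; rewrite ht2 E expr0n.
have hf : forall k, qpoch Q Q k != 0.
  elim=> [|k IH]; first by rewrite qpoch0 oner_neq0.
  rewrite qpochS mulf_neq0 // -exprS /Q -rmorphXn -(rmorph1 (real_complex R)) -rmorphB fmorph_eq0.
  by rewrite subr_eq0 gt_eqF // exprn_ilt1 // ltW.
have gz : good Q z by split.
pose T (k : nat) := t ^+ (k ^ 2) * beta ^+ k / qpoch Q Q k * (coefc Q s n k * G Q (n - k) z).
have -> : \sum_(k < N) (t ^+ (k ^ 2) * beta ^+ k / qpoch Q Q k
       * iter k (qtau s) (qHermite Q n) z) = \sum_(k < n.+1) T k.
  rewrite (big_ord_widen N T hN) [RHS]big_mkcond; apply: eq_bigr => k _.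
  rewrite (iterG hf hs0 hs2) //.
  case: ifP => // /negbT; rewrite -leqNgt => hk.
  by rewrite /coefc leqNgt hk /= mul0r mulr0.
rewrite /bigqHermite mulr_sumr.
set a := t ^ (1 - 2 * n%:Z) * beta.
pose Fm j i := z ^+ n * (qpoch Q Q n / qpoch Q Q (n - (j + i))) * (z ^- 2) ^+ (j + i)
   * (cc Q (a * z) j / (qpoch Q Q j * qpoch Q Q i)).
rewrite [RHS](eq_bigr (fun k : 'I_n.+1 => \sum_(j < k.+1) Fm j (k - j)%N)); last first.
  move=> [k hk] _ /=.
  have A := qpochA hQ0 n k hk.
  have -> : qpoch Q (Q ^- n) k * qpoch Q (a * z) k / qpoch Q Q k * (-1) ^+ k
      * Q ^- 'C(k, 2) * (Q ^+ n * z ^- 2) ^+ k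
    = (qpoch Q (Q ^- n) k * (-1) ^+ k * Q ^- 'C(k, 2) * (Q ^+ n) ^+ k
        * qpoch Q Q (n - k)) / qpoch Q Q (n - k) * (z ^- 2) ^+ k
        * (qpoch Q (a * z) k / qpoch Q Q k).
    have h1 := hf k; have h2 := hf (n - k)%N.
    by rewrite exprMn; field; rewrite ?h1 ?h2 ?expf_neq0.
  rewrite A (qbin (a * z) hf k) [_ / qpoch Q Q k]mulrC mulKf // !mulr_sumr.
  apply: eq_bigr => [[j hj]] _ /=.
  rewrite /Fm subnKC //; ring.
rewrite (@tri _ Fm n).
apply: eq_bigr => [[j hj]] _ /=.
rewrite /T /coefc -ltnS hj /G !mulr_sumr; apply: eq_bigr => [[i hi]] _ /=.
rewrite /Fm subnDA.
set r := (n - j - i)%N.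
have hn : n = (j + i + r)%N by rewrite /r; lia.
exact: (term_eq R t s Q beta z ht0 hz0 ht2 hs2 _ _ _ _ (hf j) (hf i) (hf r) j i r n hn).
Qed.
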